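(* Let $N \ge 1$ be an integer and let $0 < \delta < \frac{1}{N}$. For $\alpha > 0$, let $Q_{\vec{p}^*(\alpha)}:\mathbb{R}\to\mathbb{R}$ be the $N$-level scalar quantizer that maps each $x \in \mathbb{R}$ to the nearest point of $\{\frac{(2k-1)\alpha}{2N} : k = 1,\dots,N\}$. Equivalently, it partitions $(0,\alpha)$ into $N$ consecutive intervals of equal length $\alpha/N$ and reconstructs each cell by its midpoint; points below $0$ go to the first midpoint and points above $\alpha$ go to the last midpoint. For an $N$-level scalar quantizer $Q$ (a measurable map $\mathbb{R}\to\mathbb{R}$ whose range consists of $N$ points), define $$D(\alpha, Q) := \mathbb{E}_{X\sim \mathrm{Unif}(0,\alpha)}\big[(X-Q(X))^2\big], \qquad V(Q) := \max_{\alpha \in \{1, 1+\delta\}} D(\alpha, Q).$$ Then $$V\big(Q_{\vec{p}^*(1+\delta)}\big) < V\big(Q_{\vec{p}^*(1)}\big).$$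
   Context: $\mathrm{Unif}(0,\alpha)$ denotes the uniform distribution on $(0,\alpha)$. $D(\alpha,Q)$ is the expected squared-error distortion of quantizer $Q$ on the source $\mathrm{Unif}(0,\alpha)$. $V(Q)$ is the worst-case distortion over the two sources $\mathrm{Unif}(0,1)$ and $\mathrm{Unif}(0,1+\delta)$. *)

(* Defs.v *)
From Stdlib Require Import Reals ZArith.
From Coquelicot Require Import Coquelicot.
Open Scope R_scope.

(* Floor of a real number: Int_part r = up r - 1 = floor r. *)
(* Index (0-based) of the uniform cell of (0,alpha) containing x, clamped to
   {0,...,N-1}: points below 0 go to cell 0, points above alpha to cell N-1. *)
Definition cell_index (N : nat) (alpha x : R) : Z :=
  Z.max 0 (Z.min (Z.of_nat N - 1) (Int_part (x * INR N / alpha))).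

(* The N-level uniform quantizer Q_{p*(alpha)}: reconstructs cell k (0-based)
   by its midpoint (2(k+1)-1) alpha / (2N) = (2k+1) alpha / (2N). *)
Definition Qstar (N : nat) (alpha : R) (x : R) : R :=
  (2 * IZR (cell_index N alpha x) + 1) * alpha / (2 * INR N).

(* D(alpha, Q) = E_{X ~ Unif(0,alpha)} [(X - Q X)^2]
              = (1/alpha) * int_0^alpha (x - Q x)^2 dx. *)
Definition Dist (alpha : R) (Q : R -> R) : R :=
  RInt (fun x => (x - Q x) ^ 2) 0 alpha / alpha.

Definition Vworst (delta : R) (Q : R -> R) : R :=
  Rmax (Dist 1 Q) (Dist (1 + delta) Q).

(* Main.v *)
Require Import Defs.
From Stdlib Require Import Reals ZArith Lra Lia Psatz.
From Coquelicot Require Import Coquelicot.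
Open Scope R_scope.

Lemma Ip_eq (y : R) (j : Z) : IZR j < y < IZR j + 1 -> Int_part y = j.
Proof.
  intros [h1 h2]. destruct (base_Int_part y) as [b1 b2].
  assert (A : (Int_part y < j + 1)%Z) by (apply lt_IZR; rewrite plus_IZR; simpl; lra).
  assert (B : (j - 1 < Int_part y)%Z) by (apply lt_IZR; rewrite minus_IZR; simpl; lra).
  lia.
Qed.

Lemma Q_cell N alpha (j : nat) x : (1 <= N)%nat -> 0 < alpha -> (j < N)%nat ->
  INR j * (alpha / INR N) < x < (INR j + 1) * (alpha / INR N) ->
  Qstar N alpha x = (2 * INR j + 1) * (alpha / INR N) / 2.
Proof.
  intros HN Ha Hj Hx.
  assert (Hn : 0 < INR N) by (apply lt_0_INR; lia).
  unfold Qstar, cell_index.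
  assert (E : Int_part (x * INR N / alpha) = Z.of_nat j).
  { apply Ip_eq. rewrite <- INR_IZR_INZ.
    destruct Hx as [h1 h2].
    assert (Hw : 0 < alpha / INR N) by (apply Rdiv_lt_0_compat; lra).
    split.
    - apply (Rmult_lt_reg_r (alpha / INR N)); auto.
      replace (x * INR N / alpha * (alpha / INR N)) with x by (field; lra). lra.
    - apply (Rmult_lt_reg_r (alpha / INR N)); auto.
      replace (x * INR N / alpha * (alpha / INR N)) with x by (field; lra). lra. }
  rewrite E.
  replace (Z.max 0 (Z.min (Z.of_nat N - 1) (Z.of_nat j))) with (Z.of_nat j) by lia.
  rewrite <- INR_IZR_INZ. field. lra.
Qed.

Lemma Q_last N alpha x : (1 <= N)%nat -> 0 < alpha ->
  (INR N - 1) * (alpha / INR N) < x ->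
  Qstar N alpha x = (2 * INR N - 1) * (alpha / INR N) / 2.
Proof.
  intros HN Ha Hx.
  assert (Hn : 0 < INR N) by (apply lt_0_INR; lia).
  unfold Qstar, cell_index.
  assert (Hw : 0 < alpha / INR N) by (apply Rdiv_lt_0_compat; lra).
  assert (E : (Z.of_nat N - 1 <= Int_part (x * INR N / alpha))%Z).
  { destruct (base_Int_part (x * INR N / alpha)) as [b1 b2].
    assert (Hy : INR N - 1 < x * INR N / alpha).
    { apply (Rmult_lt_reg_r (alpha / INR N)); auto.
      replace (x * INR N / alpha * (alpha / INR N)) with x by (field; lra). lra. }
    assert (Z.of_nat N - 2 < Int_part (x * INR N / alpha))%Z.
    { apply lt_IZR. rewrite minus_IZR, <- INR_IZR_INZ. simpl. lra. }
    lia. }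
  replace (Z.max 0 (Z.min (Z.of_nat N - 1) (Int_part (x * INR N / alpha)))) with (Z.of_nat N - 1)%Z by lia.
  rewrite minus_IZR, <- INR_IZR_INZ. simpl. field. lra.
Qed.

Lemma is_RInt_sq c p q : is_RInt (fun x => (x - c) ^ 2) p q (((q - c) ^ 3 - (p - c) ^ 3) / 3).
Proof.
  assert (H := is_RInt_derive (fun x => (x - c) ^ 3 / 3) (fun x => (x - c) ^ 2) p q).
  replace (((q - c) ^ 3 - (p - c) ^ 3) / 3) with (minus ((q - c) ^ 3 / 3) ((p - c) ^ 3 / 3)).
  2:{ unfold minus, plus, opp; simpl. field. }
  apply H.
  - intros x _. auto_derive; auto. field.
  - intros x _. apply (ex_derive_continuous (fun x => (x - c) ^ 2)). auto_derive; auto.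
Qed.

Lemma is_RInt_val (f : R -> R) a b l l' : is_RInt f a b l -> l = l' -> is_RInt f a b l'.
Proof. intros H <-; exact H. Qed.

Definition F N alpha := fun x => (x - Qstar N alpha x) ^ 2.

Lemma cells N alpha (k : nat) : (1 <= N)%nat -> 0 < alpha -> (k <= N - 1)%nat ->
  is_RInt (F N alpha) 0 (INR k * (alpha / INR N)) (INR k * (alpha / INR N) ^ 3 / 12).
Proof.
  intros HN Ha. set (w := alpha / INR N).
  assert (Hn : 0 < INR N) by (apply lt_0_INR; lia).
  assert (Hw : 0 < w) by (apply Rdiv_lt_0_compat; lra).
  induction k as [|k IH]; intros Hk.
  - simpl. eapply is_RInt_val. replace (0 * w) with 0 by ring. apply is_RInt_point.
    simpl. unfold zero; simpl. field.
  - eapply is_RInt_val. eapply is_RInt_Chasles. apply IH; lia.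
    apply (is_RInt_ext (fun x => (x - (2 * INR k + 1) * w / 2) ^ 2)).
    + intros x Hx. unfold F. rewrite S_INR in Hx.
      assert (Hk0 : 0 <= INR k) by apply pos_INR.
      rewrite Rmin_left, Rmax_right in Hx by nra.
      rewrite (Q_cell N alpha k x); auto; lia.
    + apply is_RInt_sq.
    + rewrite S_INR. unfold plus; simpl. field.
Qed.

Lemma Gval N alpha b : (1 <= N)%nat -> 0 < alpha -> (INR N - 1) * (alpha / INR N) < b ->
  is_RInt (F N alpha) 0 b
   ((INR N - 1) * (alpha / INR N) ^ 3 / 12 +
    ((b - (2 * INR N - 1) * (alpha / INR N) / 2) ^ 3 + (alpha / INR N) ^ 3 / 8) / 3).
Proof.
  intros HN Ha Hb.
  assert (Hn : 0 < INR N) by (apply lt_0_INR; lia).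
  assert (Hw : 0 < alpha / INR N) by (apply Rdiv_lt_0_compat; lra).
  assert (E : INR (N - 1) = INR N - 1) by (rewrite minus_INR; simpl; auto; lra).
  eapply is_RInt_val. eapply is_RInt_Chasles.
  apply (cells N alpha (N - 1)); auto.
  rewrite E.
  apply (is_RInt_ext (fun x => (x - (2 * INR N - 1) * (alpha / INR N) / 2) ^ 2)).
  + intros x Hx. unfold F. rewrite (Q_last N alpha x); auto.
    rewrite Rmin_left in Hx; lra.
  + apply is_RInt_sq.
  + rewrite E. unfold plus; simpl. field. lra.
Qed.
Lemma keyQ e d : 0 < d -> d < e -> e <= 1 ->
  0 < e^2/6 + 2*d^2/3 + e^2*d/4 - e*d^2 + d^3/3 + 5*e^2*d^2/12 - e*d^3/2 + e^2*d^3/6.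
Proof. intros H1 H2 H3.
assert (h6: 0 <= d^3) by (apply pow_le; lra).
assert (h1: e*d^2 <= e^2*d) by (assert (0 <= (e*d)*(e-d)) by (apply Rmult_le_pos; nra); nra).
assert (h2: e*d^3 <= e^2*d^2) by (assert (0 <= (e*d^2)*(e-d)) by (apply Rmult_le_pos; nra); nra).
assert (h3: e*d^3 <= d^3) by (assert (0 <= (1-e)*d^3) by (apply Rmult_le_pos; lra); nra).
assert (h4: e*d^2 <= d^2) by (assert (0 <= (1-e)*d^2) by (apply Rmult_le_pos; nra); nra).
assert (h5: d^2 < e^2) by nra.
assert (h7: 0 <= e^2*d^3) by (apply Rmult_le_pos; nra).
nra.
Qed.
Lemma other e d : 0 < d -> d < e -> e <= 1 ->
  let a := 1 + d in
  ((a^3*e^2 - a^3*e^3)/12 + ((a*e/2-d)^3 + a^3*e^3/8)/3)*a <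
  (e^2-e^3)/12 + ((d+e/2)^3 + e^3/8)/3.
Proof. intros H1 H2 H3 a. unfold a.
assert (K := keyQ e d H1 H2 H3).
apply Rlt_0_minus. clear a.
assert (Heq: (e^2-e^3)/12 + ((d+e/2)^3 + e^3/8)/3 - ((((1+d)^3*e^2 - (1+d)^3*e^3)/12 + (((1+d)*e/2-d)^3 + (1+d)^3*e^3/8)/3)*(1+d)) = d * (e^2/6 + 2*d^2/3 + e^2*d/4 - e*d^2 + d^3/3 + 5*e^2*d^2/12 - e*d^3/2 + e^2*d^3/6)) by field.
rewrite Heq.
apply Rmult_lt_0_compat; lra.
Qed.

Theorem lemma2 (N : nat) (delta : R) :
  (1 <= N)%nat -> 0 < delta -> delta < 1 / INR N ->
  Vworst delta (Qstar N (1 + delta)) < Vworst delta (Qstar N 1).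
Proof.
  intros HN Hd Hdn.
  assert (Hn : 1 <= INR N) by (apply (le_INR 1); lia).
  set (n := INR N) in *.
  assert (Hdn' : delta * n < 1).
  { apply (Rmult_lt_compat_r n) in Hdn; [|lra]. unfold Rdiv in Hdn.
    rewrite Rmult_assoc, Rinv_l in Hdn; lra. }
  set (a := 1 + delta).
  set (e := / n).
  assert (He0 : 0 < e) by (unfold e; apply Rinv_0_lt_compat; lra).
  assert (He1 : e <= 1) by (unfold e; rewrite <- Rinv_1; apply Rinv_le_contravar; lra).
  assert (Hde : delta < e) by (unfold e; apply (Rmult_lt_reg_r n); [lra|]; rewrite Rinv_l; lra).
  unfold Vworst, Dist.
  change (RInt (fun x => (x - Qstar N 1 x) ^ 2)) with (RInt (F N 1)).
  change (RInt (fun x => (x - Qstar N a x) ^ 2)) with (RInt (F N a)).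
  assert (Ha : 0 < a) by (unfold a; lra).
  rewrite (is_RInt_unique _ _ _ _ (Gval N 1 1 HN Rlt_0_1 ltac:(fold n; apply (Rmult_lt_reg_r n); [lra|]; field_simplify; lra))).
  rewrite (is_RInt_unique _ _ _ _ (Gval N 1 (1 + delta) HN Rlt_0_1 ltac:(fold n; apply (Rmult_lt_reg_r n); [lra|]; field_simplify; nra))).
  rewrite (is_RInt_unique _ _ _ _ (Gval N a 1 HN Ha ltac:(fold n; apply (Rmult_lt_reg_r n); [lra|]; field_simplify; unfold a; nra))).
  rewrite (is_RInt_unique _ _ _ _ (Gval N a (1 + delta) HN Ha ltac:(fold n; apply (Rmult_lt_reg_r n); [lra|]; field_simplify; unfold a; nra))).
  fold n a.
  assert (E1a : (n - 1) * (1 / n) ^ 3 / 12 + ((a - (2 * n - 1) * (1 / n) / 2) ^ 3 + (1 / n) ^ 3 / 8) / 3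
     = (e^2-e^3)/12 + ((delta+e/2)^3 + e^3/8)/3) by (unfold e, a; field; lra).
  assert (Ea1 : (n - 1) * (a / n) ^ 3 / 12 + ((1 - (2 * n - 1) * (a / n) / 2) ^ 3 + (a / n) ^ 3 / 8) / 3
     = (a^3*e^2 - a^3*e^3)/12 + ((a*e/2-delta)^3 + a^3*e^3/8)/3) by (unfold e, a; field; lra).
  assert (Eaa : (n - 1) * (a / n) ^ 3 / 12 + ((a - (2 * n - 1) * (a / n) / 2) ^ 3 + (a / n) ^ 3 / 8) / 3
     = a^3*e^2/12) by (unfold e, a; field; lra).
  rewrite E1a, Ea1, Eaa.
  assert (I1 := other e delta Hd Hde He1). cbv zeta in I1. fold a in I1.
  assert (I2 : a^3*e^2/12 < (e^2-e^3)/12 + ((delta+e/2)^3 + e^3/8)/3).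
  { apply Rlt_0_minus.
    replace ((e^2-e^3)/12 + ((delta+e/2)^3 + e^3/8)/3 - a^3*e^2/12) with
      (delta^3/3 * (1 - e^2/4) + delta^2 * e * (1/2 - e/4)) by (unfold a; field).
    assert (0 < delta^3) by (apply pow_lt; lra).
    assert (0 < delta^2 * e) by (apply Rmult_lt_0_compat; [apply pow_lt|]; lra).
    assert (0 < 1 - e^2/4) by nra.
    apply Rplus_lt_0_compat; apply Rmult_lt_0_compat; nra. }
  set (X := (e^2-e^3)/12 + ((delta+e/2)^3 + e^3/8)/3) in *.
  apply Rlt_le_trans with (X / a); [| apply Rmax_r].
  apply Rmax_lub_lt.
  - replace (((a^3*e^2 - a^3*e^3)/12 + ((a*e/2-delta)^3 + a^3*e^3/8)/3) / 1) with
      (((a^3*e^2 - a^3*e^3)/12 + ((a*e/2-delta)^3 + a^3*e^3/8)/3) * a / a) by (field; lra).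
    apply Rmult_lt_compat_r; [apply Rinv_0_lt_compat; lra | lra].
  - apply Rmult_lt_compat_r; [apply Rinv_0_lt_compat; lra | lra].
Qed.
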